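(* Let $\psi:(0,1]\to(0,\infty)$ with $\psi(1)=1$, $\lim_{r\to0+}\psi(r)=0$ and $I_\psi\subset(0,1)$, and let $f\in C^\psi(\mathbb{R}^d)$. There exists a constant $C=C(\psi)$ such that $$[f]_{C^\psi}\le C\big(\|f\|_{C^0}+[[f]]_{C^\psi}\big).$$
   Context: $g:(0,1]\to(0,\infty)$ is almost increasing if $c\,g(r)\le g(R)$ for some $c\in(0,1]$ and all $0<r\le R\le1$, almost decreasing if $g(R)\le Cg(r)$ for some $C\ge1$ and all $0<r\le R\le1$. $M_\psi=\inf\{\alpha: \psi(r)/r^\alpha\text{ almost decreasing on }(0,1]\}$, $m_\psi=\sup\{\alpha: \psi(r)/r^\alpha\text{ almost increasing on }(0,1]\}$, $I_\psi=[m_\psi,M_\psi]$. $\|f\|_{C^0}=\sup|f|$. $[f]_{C^\psi}=\sup_{x\in\mathbb{R}^d}\sup_{0<|h|\le1}\frac{|f(x+h)-f(x)|}{\psi(|h|)}$ and $[[f]]_{C^\psi}=\sup_{x\in\mathbb{R}^d}\sup_{0<|h|\le1}\frac{|f(x+h)-2f(x)+f(x-h)|}{\psi(|h|)}$. When $m_\psi\in(0,1]$, $C^\psi(\mathbb{R}^d)$ is the space of bounded continuous $f$ with $[f]_{C^\psi}<\infty$. *)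

(* Defs.v *)
From HB Require Import structures.
From mathcomp Require Import all_boot all_order all_algebra.
From mathcomp Require Import all_classical all_reals all_analysis.
Set Implicit Arguments. Unset Strict Implicit. Unset Printing Implicit Defensive.
Import Order.TTheory GRing.Theory Num.Theory.
Import numFieldNormedType.Exports.
Local Open Scope classical_set_scope.
Local Open Scope ring_scope.

Section Defs.
Variable R : realType.

(* g : (0,1] -> (0,oo), represented as a function R -> R used only on (0,1] *)
Definition almost_increasing (g : R -> R) : Prop :=
  exists c : R, 0 < c <= 1 /\
    forall r s : R, 0 < r -> r <= s -> s <= 1 -> c * g r <= g s.

Definition almost_decreasing (g : R -> R) : Prop :=
  exists C : R, 1 <= C /\
    forall r s : R, 0 < r -> r <= s -> s <= 1 -> g s <= C * g r.

Definition M_psi (psi : R -> R) : \bar R :=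
  ereal_inf [set a%:E | a in [set a : R |
                 almost_decreasing (fun r => psi r / r `^ a)]].

Definition m_psi (psi : R -> R) : \bar R :=
  ereal_sup [set a%:E | a in [set a : R |
                 almost_increasing (fun r => psi r / r `^ a)]].

Definition enorm (d : nat) (h : 'rV[R]_d) : R :=
  Num.sqrt (\sum_(i < d) h ord0 i ^+ 2).

Definition supnorm (d : nat) (f : 'rV[R]_d -> R) : \bar R :=
  ereal_sup [set `|f x|%:E | x in [set: 'rV[R]_d]].

Definition holder_semi (psi : R -> R) (d : nat) (f : 'rV[R]_d -> R) : \bar R :=
  ereal_sup [set y : \bar R | exists x h : 'rV[R]_d,
    [/\ 0 < enorm h, enorm h <= 1 &
        y = (`|f (x + h) - f x| / psi (enorm h))%:E]].

Definition holder_semi2 (psi : R -> R) (d : nat) (f : 'rV[R]_d -> R) : \bar R :=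
  ereal_sup [set y : \bar R | exists x h : 'rV[R]_d,
    [/\ 0 < enorm h, enorm h <= 1 &
        y = (`|f (x + h) - 2 * f x + f (x - h)| / psi (enorm h))%:E]].

Definition Cpsi (psi : R -> R) (d : nat) : set ('rV[R]_d -> R) :=
  [set f | continuous f /\ (exists M : R, forall x, `|f x| <= M) /\
           (holder_semi psi f < +oo)%E].

End Defs.

(* Main.v *)
Require Import Defs.
From HB Require Import structures.
From mathcomp Require Import all_boot all_order all_algebra.
From mathcomp Require Import all_classical all_reals all_analysis.
From mathcomp Require Import ring lra.
Import Order.TTheory GRing.Theory Num.Theory.
Import numFieldNormedType.Exports.
Local Open Scope classical_set_scope.
Local Open Scope ring_scope.


Lemma enormZ (R : realType) (d : nat) (c : R) (h : 'rV[R]_d) :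
  enorm (c *: h) = `|c| * enorm h.
Proof.
rewrite /enorm.
under eq_bigr => i _ do rewrite mxE exprMn.
by rewrite -big_distrr /= sqrtrM ?sqr_ge0 // sqrtr_sqr.
Qed.

Lemma enorm2 (R : realType) (d : nat) (h : 'rV[R]_d) :
  enorm (h + h) = 2 * enorm h.
Proof.
have -> : h + h = (2 : R) *: h by rewrite scaler_nat mulr2n.
by rewrite enormZ ger0_norm.
Qed.

Lemma iter_bound (R : realType) (d : nat) (psi : R -> R) (f : 'rV[R]_d -> R) (M K : R) :
 (forall z, `|f z| <= M) ->
 (forall x k, 0 < enorm k -> enorm k <= 1 ->
    `|f (x + k) - 2 * f x + f (x - k)| <= K * psi (enorm k)) ->
 forall n x h, 0 < enorm h -> 2 ^+ n * enorm h <= 2 ->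
 `|f (x + h) - f x| <= 2 * M / 2 ^+ n +
    K * \sum_(j < n) psi (2 ^+ j * enorm h) / 2 ^+ j.+1.
Proof.
move=> HM HK n; elim: n => [|n IH] x h hpos hle.
  rewrite expr0 divr1 big_ord0 mulr0 addr0.
  apply: le_trans (ler_normB _ _) _.
  have := HM (x + h); have := HM x; lra.
have p1 : 1 <= (2 : R) ^+ n by apply: exprn_ege1; lra.
have h1 : enorm h <= 1 by move: hle; rewrite exprS; nra.
have IH2 := IH x (h + h).
rewrite enorm2 in IH2.
have := IH2 (ltac:(lra)) (ltac:(move: hle; rewrite exprS; lra)).
have := HK (x + h) h hpos h1.
rewrite addrK (_ : x + h + h = x + (h + h)); last by rewrite addrA.
rewrite big_ord_recl /= expr0 mul1r expr1.
have -> : \sum_(i < n) psi (2 ^+ (bump 0 i) * enorm h) / 2 ^+ (bump 0 i).+1 =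
   (\sum_(j < n) psi (2 ^+ j * (2 * enorm h)) / 2 ^+ j.+1) / 2.
  rewrite mulr_suml; apply: eq_bigr => i _.
  rewrite /bump /= add1n mulrA -exprSr [_ ^+ i.+2]exprSr invfM mulrA //.
have -> : 2 * M / 2 ^+ n.+1 = (2 * M / 2 ^+ n) / 2.
  by rewrite exprSr invfM mulrA.
set S := \sum_(j < n) _.
set X := 2 * M / 2 ^+ n.
set A := f (x + (h + h)).
move=> B1 B2.
have -> : f (x + h) - f x = ((A - f x) - (A - 2 * f (x + h) + f x)) / 2 by field.
have n2 : `|(2:R)| = 2 by rewrite ger0_norm.
rewrite normrM normfV n2.
have := ler_normB (A - f x) (A - 2 * f (x + h) + f x).
have -> : K * (psi (enorm h) / 2 + S / 2) = (K * psi (enorm h) + K * S) / 2 by field.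
lra.
Qed.

Lemma pow2_lt (R : realType) (a : R) : a < 1 -> 0 < 2 `^ a < 2.
Proof.
move=> a1; rewrite powR_gt0 //=.
have l2 : 0 < ln (2:R) by apply: ln_gt0; lra.
rewrite /powR (_ : ((2:R) == 0) = false); last by apply/negbTE; lra.
have : expR (a * ln 2) < expR (1 * ln (2:R)) by rewrite ltr_expR; nra.
by rewrite mul1r lnK // posrE.
Qed.

Lemma powR_exprn (R : realType) (a : R) (j : nat) : (2 ^+ j) `^ a = (2 `^ a) ^+ j.
Proof.
elim: j => [|j IH]; first by rewrite !expr0 powR1.
by rewrite !exprS powRM ?IH // exprn_ge0.
Qed.

Lemma geom_le (R : realType) (q : R) (n : nat) : 0 <= q < 1 ->
  \sum_(j < n) q ^+ j <= (1 - q)^-1.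
Proof.
move=> /andP [q0 q1].
have E := subrX1 q n.
have qn : 0 <= q ^+ n by apply: exprn_ge0.
rewrite -div1r ler_pdivlMr; last lra.
have -> : (\sum_(j < n) q ^+ j) * (1 - q) = 1 - q ^+ n.
  have -> : 1 - q ^+ n = - (q ^+ n - 1) by ring.
  rewrite E; ring.
lra.
Qed.

Arguments pow2_lt {R a}.
Arguments iter_bound {R d psi f M K}.
Lemma main_real (R : realType) (d : nat) (psi : R -> R) (f : 'rV[R]_d -> R)
  (M K a C0 : R) :
  a < 1 ->
  (forall r s, 0 < r -> r <= s -> s <= 1 -> psi s / s `^ a <= C0 * (psi r / r `^ a)) ->
  psi 1 = 1 -> (forall r, 0 < r <= 1 -> 0 < psi r) ->
  0 <= K ->
  (forall z, `|f z| <= M) ->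
  (forall x k, 0 < enorm k -> enorm k <= 1 ->
    `|f (x + k) - 2 * f x + f (x - k)| <= K * psi (enorm k)) ->
  forall x h, 0 < enorm h -> enorm h <= 1 ->
  `|f (x + h) - f x| <= C0 * psi (enorm h) * (2 * M + K / (2 * (1 - 2 `^ a / 2))).
Proof.
move=> a1 Had psi1 psip K0 HM HK x h.
set e := enorm h => e0 e1.
have M0 : 0 <= M := le_trans (normr_ge0 _) (HM x).
have /andP [p0 p2] := pow2_lt a1.
set p := 2 `^ a in p0 p2 *.
set q := p / 2.
have q0 : 0 <= q by rewrite /q; apply: divr_ge0; lra.
have q1 : q < 1 by rewrite /q ltr_pdivrMr; lra.
have pe : 0 < psi e by apply: psip; rewrite e0 e1.
have ea : 0 < e `^ a by apply: powR_gt0.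
have he : e <= C0 * psi e.
  have := Had e 1 e0 e1 (lexx _).
  rewrite psi1 powR1 /= divr1 mulrA ler_pdivlMr //.
  have : e <= e `^ a by apply: ger1_powR; rewrite ?e0 ?e1 //; lra.
  lra.
have C00 : 0 <= C0.
  have : 0 <= C0 * psi e by lra.
  by rewrite pmulr_lge0.
pose P := fun n : nat => 1 < 2 ^+ n * e.
have exP : exists n, P n.
  exists (Num.Def.archi_bound e^-1).
  have ei : 0 <= e^-1 by rewrite invr_ge0 ltW.
  have := archi_boundP ei.
  set N := Num.Def.archi_bound _ => HN.
  have HN2 : (N%:R : R) < 2 ^+ N.
    by rewrite -natrX ltr_nat ltn_expl.
  have H1 : e^-1 * e < 2 ^+ N * e by rewrite ltr_pM2r // (lt_trans HN HN2).
  by rewrite mulVf ?lt0r_neq0 // in H1.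
case: (ex_minnP exP) => n Pn Hmin.
case: n Pn Hmin => [|m] Pn Hmin.
  by move: Pn; rewrite /P expr0 mul1r; lra.
have nPm : 2 ^+ m * e <= 1.
  rewrite leNgt; apply/negP => Pm.
  by have := Hmin m Pm; rewrite ltnn.
have hle2 : 2 ^+ m.+1 * e <= 2 by rewrite exprS -mulrA; lra.
have IB := iter_bound HM HK m.+1 x h e0 hle2.
apply: le_trans IB _.
have T1 : 2 * M / 2 ^+ m.+1 <= 2 * M * e.
  rewrite ler_pdivrMr ?exprn_gt0 //.
  move: Pn; rewrite /P; set t := 2 ^+ m.+1 => Pn; nra.
have T2 : \sum_(j < m.+1) psi (2 ^+ j * e) / 2 ^+ j.+1 <=
          \sum_(j < m.+1) (C0 * psi e / 2) * q ^+ j.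
  apply: ler_sum => j _.
  have pj1 : 1 <= (2:R) ^+ j by apply: exprn_ege1; lra.
  have pjm : (2:R) ^+ j <= 2 ^+ m.
    by rewrite ler_eXn2l //; [rewrite -ltnS ltn_ord | lra].
  set s := 2 ^+ j * e.
  have s1 : s <= 1 by rewrite /s; nra.
  have es : e <= s by rewrite /s; nra.
  have := Had e s e0 es s1.
  have t0 : 0 <= (2:R) ^+ j by lra.
  rewrite /s (powRM _ t0 (ltW e0)) powR_exprn -/p -/s => H.
  have H2 : psi s <= C0 * psi e * p ^+ j.
    rewrite ler_pdivrMr in H; last by rewrite mulr_gt0 // exprn_gt0.
    apply: le_trans H _.
    have -> : C0 * (psi e / e `^ a) * (p ^+ j * e `^ a) = C0 * psi e * p ^+ j.
      by field; rewrite gt_eqF.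
    by [].
  have -> : C0 * psi e / 2 * q ^+ j = (C0 * psi e * p ^+ j) / 2 ^+ j.+1.
    rewrite /q expr_div_n exprS; field.
    by rewrite expf_neq0.
  by apply: ler_wpM2r => //; rewrite invr_ge0 exprn_ge0.
have T3 : \sum_(j < m.+1) (C0 * psi e / 2) * q ^+ j <= C0 * psi e / 2 * (1 - q)^-1.
  rewrite -big_distrr /=; apply: ler_wpM2l; first by apply: divr_ge0; nra.
  by apply: geom_le; rewrite q0 q1.
apply: le_trans (lerD T1 (ler_wpM2l K0 (le_trans T2 T3))) _.
have -> : C0 * psi e * (2 * M + K / (2 * (1 - q))) =
   2 * M * (C0 * psi e) + K * (C0 * psi e / 2 * (1 - q)^-1).
  by field; lra.
apply: lerD => //; apply: ler_wpM2l => //; lra.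
Qed.

Arguments main_real {R d psi f M K a C0}.

Theorem lemma2p2 (R : realType) (psi : R -> R)
  (psi_pos : forall r : R, 0 < r <= 1 -> 0 < psi r)
  (psi1 : psi 1 = 1)
  (psi0 : psi r @[r --> 0^'+] --> 0)
  (Ipsi : (0 < m_psi psi)%E /\ (M_psi psi < 1)%E) :
  exists C : R, forall (d : nat) (f : 'rV[R]_d -> R),
    @Cpsi R psi d f ->
    (holder_semi psi f <= C%:E * (supnorm f + holder_semi2 psi f))%E.
Proof.
case: Ipsi => _ /ereal_inf_lt [y [a Ha <-]] ya.
rewrite lte_fin in ya.
case: Ha => C0 [C01 HC0].
have /andP [p0 p2] := pow2_lt ya.
set w := (2 * (1 - 2 `^ a / 2))^-1.
have w0 : 0 <= w by rewrite /w invr_ge0; lra.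
exists (C0 * (2 + w)).
have Cpos : 0 < C0 * (2 + w) by apply: mulr_gt0; lra.
move=> d f [_ [[M0 HM0] _]].
apply: ge_ereal_sup => _ [x [h [hpos hle ->]]].
have Sx : forall z, ((`|f z|)%:E <= supnorm f)%E.
  by move=> z; apply: ereal_sup_ubound; exists z.
have SM : (supnorm f <= M0%:E)%E.
  by apply: ge_ereal_sup => _ [z _ <-]; rewrite lee_fin.
have Sfin : supnorm f \is a fin_num.
  rewrite fin_numElt; apply/andP; split.
    exact: lt_le_trans (ltNyr _) (Sx x).
  exact: le_lt_trans SM (ltry _).
set M := fine (supnorm f).
have HM : forall z, `|f z| <= M by move=> z; rewrite -lee_fin /M fineK.
have Tall : forall x k, 0 < enorm k -> enorm k <= 1 ->
   ((`|f (x + k) - 2 * f x + f (x - k)| / psi (enorm k))%:E <= holder_semi2 psi f)%E.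
  move=> x0 k k0 k1; apply: ereal_sup_ubound; exists x0, k; split => //.
rewrite -(fineK Sfin) -/M.
move: (holder_semi2 psi f) Tall => T Tall.
have Tlb := Tall x h hpos hle.
have pe : 0 < psi (enorm h) by apply: psi_pos; rewrite hpos hle.
case: T Tall Tlb => [K| |] Tall Tlb.
- rewrite -EFinD -EFinM lee_fin.
  have K0 : 0 <= K.
    rewrite lee_fin in Tlb; apply: le_trans Tlb.
    by apply: divr_ge0 => //; apply: ltW.
  have HK : forall x k, 0 < enorm k -> enorm k <= 1 ->
     `|f (x + k) - 2 * f x + f (x - k)| <= K * psi (enorm k).
    move=> x0 k k0 k1; have := Tall x0 k k0 k1.
    by rewrite lee_fin ler_pdivrMr //; apply: psi_pos; rewrite k0 k1.
  have M0' : 0 <= M := le_trans (normr_ge0 _) (HM x).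
  have B := main_real ya HC0 psi1 psi_pos K0 HM HK x h hpos hle.
  rewrite ler_pdivrMr //; apply: le_trans B _.
  rewrite -/w.
  have -> : C0 * (2 + w) * (M + K) * psi (enorm h) =
     C0 * psi (enorm h) * (2 * M + K * w) + C0 * psi (enorm h) * (2 * K + w * M) by ring.
  rewrite lerDl; apply: mulr_ge0; first by apply: mulr_ge0; lra.
  by apply: addr_ge0; [lra | apply: mulr_ge0].
- by rewrite /= gt0_muley ?leey // lte_fin.
- by rewrite leeNy_eq in Tlb.
Qed.
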